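(* Let $\beta\in(0,d]$ and let $Q\subset\mathbb{R}^d$ be a cube. Suppose $C'>0$ is a constant such that $$\sum_{k}\int_{Q_{k}} f \,d\mathcal{H}^{\beta,Q}_{\infty} \leq C' \int_{\cup_{k} Q_{k}} f\,d\mathcal{H}^{\beta,Q}_{\infty}$$ for every non-negative $f$ and every family of non-overlapping cubes $\{Q_{k}\}\subset\mathcal{D}(Q)$ which satisfies $\sum_{Q_{k} \subset Q'}l(Q_{k})^\beta \leq 2l(Q')^\beta$ for each $Q' \in \mathcal{D}(Q)$. Then $$\mathcal{H}^{\beta,Q}_{\infty}\left(\left\{ x: \mathcal{M}^{\beta,Q}_\infty f(x)>t\right\}\right) \leq \frac{C'}{t} \int_{\mathbb{R}^d} |f|\,d\mathcal{H}^{\beta,Q}_{\infty}$$ for all $t>0$ and all $f \in L^1(\mathbb{R}^d;\mathcal{H}^{\beta,Q}_{\infty})$.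
   Context: For a cube $Q=a+[0,\ell)^d$ (cubes are half-open), the dyadic lattice generated by $Q$ is $\mathcal{D}(Q)=\{a+2^{-j}\ell(m+[0,1)^d): j\in\mathbb{Z}, m\in\mathbb{Z}^d\}$. The dyadic Hausdorff content adapted to $Q$ is $\mathcal{H}^{\beta,Q}_{\infty}(E)= \inf \{\sum_{i} l(Q_i)^\beta : E \subset \bigcup_{i} Q_i,\ Q_i \in \mathcal{D}(Q) \}$, $l(\cdot)$ the side length. For $f\ge0$ and a set $A$, $\int_A f\,d\mathcal{H}^{\beta,Q}_\infty=\int_0^\infty \mathcal{H}^{\beta,Q}_\infty(\{x\in A:f(x)>t\})\,dt$. $f$ is $\mathcal{H}^{\beta,Q}_\infty$-quasicontinuous if for every $\epsilon>0$ there is an open $O$ with $\mathcal{H}^{\beta,Q}_\infty(O)<\epsilon$ and $f|_{O^c}$ continuous; $L^1(\mathbb{R}^d;\mathcal{H}^{\beta,Q}_\infty)$ is the set of such $f$ with $\int_{\mathbb{R}^d}|f|\,d\mathcal{H}^{\beta,Q}_\infty<\infty$. The dyadic maximal function is $\mathcal{M}^{\beta,Q}_\infty f(x) = \sup_{Q' \in\mathcal{D}(Q)} \chi_{Q'}(x)\, l(Q')^{-\beta} \int_{Q'} |f| \,d\mathcal{H}^{\beta,Q}_{\infty}$. *)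

(* Defs.v *)
From HB Require Import structures.
From mathcomp Require Import all_boot all_order all_algebra.
From mathcomp Require Import all_classical all_reals all_analysis.
Set Implicit Arguments. Unset Strict Implicit. Unset Printing Implicit Defensive.
Import Order.TTheory GRing.Theory Num.Theory.
Import numFieldNormedType.Exports.
Local Open Scope classical_set_scope.
Local Open Scope ring_scope.

(* Points of R^d are row vectors 'rV[R]_d, coordinate i of x is x ord0 i.
   The base cube Q = a + [0,l)^d is given by (a, l) with 0 < l.
   A dyadic cube of D(Q) is indexed by (j, m) : int * ('I_d -> int) and is
   a + 2^{-j} l (m + [0,1)^d). *)

Definition dyidx (d : nat) := (int * ('I_d -> int))%type.

Definition dyside (R : realType) (d : nat) (l : R) (c : dyidx d) : R :=
  l * (2%:R : R) ^ (- c.1).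

Definition dycube (R : realType) (d : nat) (a : 'rV[R]_d) (l : R) (c : dyidx d)
  : set 'rV[R]_d :=
  [set x | forall i : 'I_d,
     a ord0 i + dyside l c * (c.2 i)%:~R <= x ord0 i /\
     x ord0 i < a ord0 i + dyside l c * ((c.2 i)%:~R + 1)].

Definition hcontent (R : realType) (d : nat) (a : 'rV[R]_d) (l beta : R)
  (E : set 'rV[R]_d) : \bar R :=
  ereal_inf [set (\esum_(c in F) ((dyside l c) `^ beta)%:E)%E
            | F in [set F : set (dyidx d) | E `<=` \bigcup_(c in F) dycube a l c]].

Definition choquet (R : realType) (d : nat) (a : 'rV[R]_d) (l beta : R)
  (A : set 'rV[R]_d) (f : 'rV[R]_d -> R) : \bar R :=
  (\int[@lebesgue_measure R]_(t in [set t : R | (0 < t)%R])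
     hcontent a l beta [set x | A x /\ (t < f x)%R])%E.

Definition quasicontinuous (R : realType) (d : nat) (a : 'rV[R]_d) (l beta : R)
  (f : 'rV[R]_d -> R) : Prop :=
  forall eps : R, 0 < eps ->
    exists O : set 'rV[R]_d, open O /\ (hcontent a l beta O < eps%:E)%E /\
      {within ~` O, continuous f}.

Definition L1H (R : realType) (d : nat) (a : 'rV[R]_d) (l beta : R)
  (f : 'rV[R]_d -> R) : Prop :=
  quasicontinuous a l beta f /\
  (choquet a l beta setT (fun x => (`|f x|)%R) < +oo)%E.

Definition dymax (R : realType) (d : nat) (a : 'rV[R]_d) (l beta : R)
  (f : 'rV[R]_d -> R) (x : 'rV[R]_d) : \bar R :=
  ereal_sup (range (fun c : dyidx d =>
    ((\1_(dycube a l c) x)%:E * ((dyside l c) `^ (- beta))%:E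
      * choquet a l beta (dycube a l c) (fun y => (`|f y|)%R))%E)).

(* Main.v *)
Require Import Defs.
From HB Require Import structures.
From mathcomp Require Import all_boot all_order all_algebra.
From mathcomp Require Import all_classical all_reals all_analysis.
From mathcomp Require Import zify ring lra.
Import Order.TTheory GRing.Theory Num.Theory.
Import numFieldNormedType.Exports.
Local Open Scope classical_set_scope.
Local Open Scope ring_scope.
Set Implicit Arguments. Unset Strict Implicit. Unset Printing Implicit Defensive.

Lemma nest1 (R : realType) (a0 s1 y z : R) (m1 m2 : int) (n : nat) : 0 < s1 ->
  a0 + s1 * m1%:~R <= y < a0 + s1 * (m1%:~R + 1) ->
  a0 + (s1 * 2 ^+ n) * m2%:~R <= y < a0 + (s1 * 2 ^+ n) * (m2%:~R + 1) ->
  a0 + s1 * m1%:~R <= z < a0 + s1 * (m1%:~R + 1) ->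
  a0 + (s1 * 2 ^+ n) * m2%:~R <= z < a0 + (s1 * 2 ^+ n) * (m2%:~R + 1).
Proof.
move=> s0 /andP[y1 y2] /andP[y3 y4] /andP[z1 z2].
have K : (2 : R) ^+ n = ((2 ^ n)%N%:Z)%:~R by rewrite -pmulrn natrX.
have E (m : int) : (m%:~R + 1 : R) = (m + 1)%:~R by rewrite intrD.
move: y1 y2 y3 y4 z1 z2; rewrite !E K -!mulrA -!intrM.
set N := ((2 ^ n)%N%:Z).
move=> y1 y2 y3 y4 z1 z2.
have h1 : m1 < N * (m2 + 1).
  by rewrite -(ltr_int R) -(ltr_pM2l s0) -(ltrD2l a0) (le_lt_trans y1 y4).
have h2 : N * m2 < m1 + 1.
  by rewrite -(ltr_int R) -(ltr_pM2l s0) -(ltrD2l a0) (le_lt_trans y3 y2).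
have h1' : m1 + 1 <= N * (m2 + 1) by lia.
have h2' : N * m2 <= m1 by lia.
apply/andP; split.
  by apply: le_trans z1; rewrite lerD2l ler_pM2l // ler_int.
by apply: (lt_le_trans z2); rewrite lerD2l ler_pM2l // ler_int.
Qed.
Section geo.
Context (R : realType) (d : nat) (a : 'rV[R]_d) (l : R) (l0 : 0 < l).
Local Notation Q := (dycube a l).
Local Notation s := (dyside l).

Lemma side_gt0 (c : dyidx d) : 0 < s c.
Proof. by rewrite /dyside mulr_gt0 // exprz_gt0. Qed.

Lemma side_rel (c1 c2 : dyidx d) : c2.1 <= c1.1 ->
  s c2 = s c1 * 2 ^+ `|c1.1 - c2.1|%N.
Proof.
move=> h; rewrite /dyside -mulrA; congr (_ * _).
have e : - c2.1 = - c1.1 + `|c1.1 - c2.1|%N by rewrite gez0_abs ?subr_ge0 //; ring.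
set n := `|c1.1 - c2.1|%N in e *; rewrite e expfzDr //.
Qed.

Lemma side_le (c1 c2 : dyidx d) : (s c1 <= s c2) = (c2.1 <= c1.1).
Proof.
rewrite /dyside ler_pM2l // ler_eXz2l; last by rewrite ltr1n.
by rewrite lerN2.
Qed.

Lemma nest (c1 c2 : dyidx d) : c2.1 <= c1.1 ->
  (exists x, Q c1 x /\ Q c2 x) -> Q c1 `<=` Q c2.
Proof.
move=> h [x [x1 x2]] z z1 i.
have [y1 y2] := x1 i; have [y3 y4] := x2 i; have [w1 w2] := z1 i.
move: y3 y4; rewrite (side_rel h) => y3 y4.
have := @nest1 R (a ord0 i) (s c1) (x ord0 i) (z ord0 i) (c1.2 i) (c2.2 i)
  `|c1.1 - c2.1|%N (side_gt0 c1).
rewrite y1 y2 y3 y4 w1 w2 => /(_ isT isT isT) /andP[].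
by move=> p1 p2; split.
Qed.

Definition corner (c : dyidx d) : 'rV[R]_d :=
  \row_i (a ord0 i + s c * (c.2 i)%:~R).

Lemma corner_in c : Q c (corner c).
Proof.
move=> i; rewrite /corner mxE; split => //.
by rewrite ltrD2l ltr_pM2l ?side_gt0 // ltrDl.
Qed.

Lemma Qsub_side (d0 : (0 < d)%N) (c1 c2 : dyidx d) : Q c1 `<=` Q c2 -> s c1 <= s c2.
Proof.
move=> sub; rewrite leNgt; apply/negP => lt21.
pose i := Ordinal d0.
pose x1 : 'rV[R]_d := \row_j (a ord0 j + s c1 * (c1.2 j)%:~R + s c2).
have hx1 : Q c1 x1.
  move=> j; rewrite /x1 mxE; split; first by rewrite lerDl ltW // side_gt0.
  by rewrite mulrDr mulr1 addrA ltrD2l.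
have [u1 _] := sub _ (corner_in c1) i.
have [_ u2] := sub _ hx1 i.
move: u1 u2; rewrite /x1 /corner !mxE => u1 u2.
have := side_gt0 c2; lra.
Qed.

Lemma Qsub_lvl (d0 : (0 < d)%N) (c1 c2 : dyidx d) : Q c1 `<=` Q c2 -> c2.1 <= c1.1.
Proof. by move=> /(Qsub_side d0); rewrite side_le. Qed.

Lemma Q_inj (d0 : (0 < d)%N) (c1 c2 : dyidx d) : Q c1 `<=` Q c2 -> Q c2 `<=` Q c1 -> c1 = c2.
Proof.
move=> s12 s21.
have e1 : c1.1 = c2.1 by apply/eqP; rewrite eq_le (Qsub_lvl d0 s12) (Qsub_lvl d0 s21).
have es : s c1 = s c2 by rewrite /dyside e1.
case: c1 c2 e1 es s12 s21 => [j1 m1] [j2 m2] /= e1 es s12 s21.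
congr (_, _) => //; apply: funext => i.
have [u1 u2] := s12 _ (corner_in (j1, m1)) i.
have [v1 v2] := s21 _ (corner_in (j2, m2)) i.
move: u1 u2 v1 v2; rewrite /corner !mxE /= -es => u1 u2 v1 v2.
have sp := side_gt0 (j1, m1).
have : (m1 i)%:~R = (m2 i)%:~R :> R.
  apply/eqP; rewrite eq_le; apply/andP; split.
    by rewrite -(ler_pM2l sp) -(lerD2l (a ord0 i)).
  by rewrite -(ler_pM2l sp) -(lerD2l (a ord0 i)).
by move/eqP; rewrite eqr_int => /eqP.
Qed.

Lemma nest_or_disj (c1 c2 : dyidx d) :
  (exists x, Q c1 x /\ Q c2 x) -> Q c1 `<=` Q c2 \/ Q c2 `<=` Q c1.
Proof.
move=> h; have [le|le] := lerP c2.1 c1.1.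
  by left; apply: nest.
right; apply: nest; first exact: ltW.
by case: h => x [? ?]; exists x.
Qed.

Lemma lvl_bound (B : R) : exists k0 : int, forall c : dyidx d, s c <= B -> k0 <= c.1.
Proof.
pose N := Num.bound `|B / l|.
have hN : `|B / l| < N%:R by apply: archi_boundP.
exists (- (N%:Z)) => c hc; rewrite leNgt; apply/negP => lt.
have c1n : c.1 < 0 by apply: lt_le_trans lt _; rewrite oppr_le0.
have e : - c.1 = (`|c.1|%N)%:Z by rewrite ltz0_abs.
move: hc; rewrite /dyside e /= => hc.
have hm : (N < `|c.1|%N)%N.
  by rewrite -ltz_nat -e ltrNr.
have h2 : ((`|c.1|%N)%:R : R) <= 2 ^+ `|c.1|%N.
  rewrite -natrX ler_nat; apply: ltnW; exact: ltn_expl.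
have h3 : (N%:R : R) < (`|c.1|%N)%:R by rewrite ltr_nat.
have h4 : B / l <= `|B / l| by apply: ler_norm.
have h5 : B / l < 2 ^+ `|c.1|%N by lra.
move: h5; rewrite ltr_pdivrMr // => h5.
have : 2 ^+ `|c.1|%N * l <= B by rewrite mulrC.
lra.
Qed.
Lemma max_exists (d0 : (0 < d)%N) (P : dyidx d -> Prop) (B : R) :
  (forall c, P c -> s c <= B) -> forall c0, P c0 ->
  exists c, [/\ P c, Q c0 `<=` Q c & forall c', P c' -> Q c `<=` Q c' -> c' = c].
Proof.
move=> PB c0 Pc0; have [k0 hk0] := lvl_bound B.
pose K (k : int) := exists c, [/\ P c, Q c0 `<=` Q c & c.1 = k].
have exP : exists n, `[< K (k0 + n%:Z) >].
  exists `|c0.1 - k0|%N; apply/asboolP; exists c0; split => //.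
  have := hk0 _ (PB _ Pc0); rewrite -subr_ge0 => h.
  by rewrite gez0_abs //; ring.
case: (ex_minnP exP) => n /asboolP [c [Pc sc e]] nmin.
exists c; split => // c' Pc' scc'.
have l1 : c'.1 <= c.1 by apply: Qsub_lvl.
have l2 : c.1 <= c'.1.
  have h := hk0 _ (PB _ Pc'); rewrite -subr_ge0 in h.
  have : (n <= `|c'.1 - k0|%N)%N.
    apply: nmin; apply/asboolP; exists c'; split => //.
      exact: subset_trans scc'.
    by rewrite gez0_abs //; ring.
  rewrite -lez_nat gez0_abs //; lia.
apply: Q_inj => //; apply: nest => //.
by exists (corner c); split; [apply: scc'; apply: corner_in | apply: corner_in].
Qed.

Lemma max_disj (P : dyidx d -> Prop) (c1 c2 : dyidx d) :
  (forall c', P c' -> Q c1 `<=` Q c' -> c' = c1) ->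
  (forall c', P c' -> Q c2 `<=` Q c' -> c' = c2) -> P c1 -> P c2 -> c1 <> c2 ->
  Q c1 `&` Q c2 = set0.
Proof.
move=> m1 m2 P1 P2 ne; apply/seteqP; split => // x [x1 x2].
have [h|h] := nest_or_disj (ex_intro _ x (conj x1 x2)).
  by apply: ne; apply/esym/m1.
by apply: ne; apply: m2.
Qed.
End geo.

Section anal.
Local Open Scope ereal_scope.

Lemma int_mono (R : realType) (D : set R) (f1 f2 : R -> \bar R) :
  (forall x, D x -> 0 <= f1 x) -> (forall x, D x -> f1 x <= f2 x) ->
  \int[@lebesgue_measure R]_(x in D) f1 x <= \int[@lebesgue_measure R]_(x in D) f2 x.
Proof.
move=> f10 f12; rewrite /integral.
have N0 (f : R -> \bar R) : (forall x, D x -> 0 <= f x) -> (f \_ D)^\- = cst 0.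
  move=> f0; apply: funext => x; rewrite funenegE /patch /=.
  case: ifPn => [/set_mem /f0 h|_]; last by rewrite oppe0 maxxx.
  by apply/max_r; rewrite leeNl oppe0.
rewrite (N0 f1) // (N0 f2); last by move=> x Dx; apply: le_trans (f12 _ Dx); apply: f10.
apply: leeB => //; apply: ereal_sup_le => _ [h /= hle <-]; exists h => //= x.
apply: (le_trans (hle x)); rewrite !funeposE /patch; case: ifPn => // /set_mem Dx.
by rewrite ge_max !le_max lexx orbT (f12 _ Dx).
Qed.

Section an.
Context (R : realType) (d : nat) (a : 'rV[R]_d) (l beta : R).
Local Notation Q := (dycube a l).
Local Notation H := (hcontent a l beta).

Lemma hcontent_ge0 E : 0 <= H E.
Proof.
apply: le_ereal_inf_tmp => _ [F _ <-]; apply: esum_ge0 => c _.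
by rewrite lee_fin powR_ge0.
Qed.

Lemma hcontent_cover E (F : set (dyidx d)) :
  E `<=` \bigcup_(c in F) Q c -> H E <= \esum_(c in F) ((dyside l c) `^ beta)%:E.
Proof. by move=> EF; apply: ereal_inf_lbound; exists F. Qed.

Lemma hcontent_mono A B : A `<=` B -> H A <= H B.
Proof.
move=> AB; apply: ereal_inf_le_tmp => _ [F FB <-]; exists F => //.
exact: subset_trans FB.
Qed.

Lemma choquet_ge0 A g : 0 <= choquet a l beta A g.
Proof. by apply: integral_ge0 => t _; apply: hcontent_ge0. Qed.

Lemma choquet_mono A B g : A `<=` B -> choquet a l beta A g <= choquet a l beta B g.
Proof.
move=> AB; apply: int_mono => t _; first exact: hcontent_ge0.
by apply: hcontent_mono => x [Ax gx]; split => //; apply: AB.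
Qed.

End an.

Lemma esum_subset (R : realType) (T : choiceType) (A B : set T) (f : T -> \bar R) :
  A `<=` B -> (forall x, B x -> 0 <= f x) ->
  \esum_(i in A) f i <= \esum_(i in B) f i.
Proof.
move=> AB f0; apply: ge_ereal_sup => _ [X [finX XA] <-].
by apply: ereal_sup_ubound; exists X => //; split => //; apply: subset_trans AB.
Qed.

Lemma esum_single_le (R : realType) (T : choiceType) (A : set T) (f : T -> \bar R) c :
  A c -> f c <= \esum_(i in A) f i.
Proof.
move=> Ac; apply: esum_ge; exists [set c].
  by split; [exact: finite_set1 | move=> x ->].
by rewrite fsbig_set1.
Qed.

Lemma esum_divr (R : realType) (T : choiceType) (A : set T) (f : T -> \bar R) (k : \bar R) :
  (forall x, 0 <= f x) -> 0 <= k ->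
  \esum_(i in A) (f i * k) <= (\esum_(i in A) f i) * k.
Proof.
move=> f0 k0; apply: ge_ereal_sup => _ [X [finX XA] <-].
rewrite -ge0_mule_fsuml //; apply: lee_wpmul2r => //.
by apply: ereal_sup_ubound; exists X.
Qed.

Lemma chain_seq (T : eqType) (F : set (set T)) : total_on F subset ->
  forall s : seq T, (forall x, x \in s -> exists2 Y, F Y & Y x) ->
  s = [::] \/ exists2 Y, F Y & forall x, x \in s -> Y x.
Proof.
move=> tot; elim => [|x s IH] hs; first by left.
right; have [Y FY Yx] := hs x (mem_head _ _).
have [->|[Z FZ Zs]] := IH (fun y ys => hs y (@mem_behead _ (x :: s) y ys)).
  by exists Y => // y; rewrite inE => /eqP ->.
have [YZ|ZY] := tot _ _ FY FZ.
  exists Z => // y; rewrite inE => /orP[/eqP ->|]; [exact: YZ | exact: Zs].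
exists Y => // y; rewrite inE => /orP[/eqP -> //|/Zs]; exact: ZY.
Qed.

Lemma side_of_w (R : realType) (beta x B : R) : (0 < beta)%R -> (0 <= x)%R ->
  (x `^ beta <= B)%R -> (x <= B `^ beta^-1)%R.
Proof.
move=> b0 x0 h.
have -> : x = ((x `^ beta) `^ beta^-1)%R by rewrite -powRrM mulfV ?gt_eqF // powRr1.
apply: ge0_ler_powR => //; first by rewrite invr_ge0 ltW.
  by rewrite nnegrE powR_ge0.
by rewrite nnegrE (le_trans _ h) // powR_ge0.
Qed.

End anal.

Unset Implicit Arguments.

Theorem theorem3p1 (R : realType) (d : nat) (beta : R) (a : 'rV[R]_d) (l : R)
  (C' : R) :
  0 < beta -> beta <= d%:R -> 0 < l -> 0 < C' ->
  (forall (f : 'rV[R]_d -> R) (F : set (dyidx d)),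
     (forall x, 0 <= f x) ->
     (forall c1 c2, F c1 -> F c2 -> c1 <> c2 ->
        dycube a l c1 `&` dycube a l c2 = set0) ->
     (forall c' : dyidx d,
        (\esum_(c in [set c | F c /\ dycube a l c `<=` dycube a l c'])
            ((dyside l c) `^ beta)%:E
          <= (2 * (dyside l c') `^ beta)%:E)%E) ->
     (\esum_(c in F) choquet a l beta (dycube a l c) f
       <= C'%:E * choquet a l beta (\bigcup_(c in F) dycube a l c) f)%E) ->
  forall (t : R) (f : 'rV[R]_d -> R), 0 < t -> L1H a l beta f ->
    (hcontent a l beta [set x | (t%:E < dymax a l beta f x)%E]
      <= (C' / t)%:E * choquet a l beta setT (fun x => (`|f x|)%R))%E.
Proof.
move=> b0 bd l0 C0 hyp t f t0 [_ Ifin].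
have d0 : (0 < d)%N by rewrite -(ltr0n R); apply: lt_le_trans bd.
set g := fun x => `|f x|.
have g0 x : 0 <= g x := normr_ge0 _.
set I := choquet a l beta setT g.
set Jc := fun c => choquet a l beta (dycube a l c) g.
set w := fun c : dyidx d => dyside l c `^ beta.
have w0 c : 0 < w c by apply: powR_gt0; apply: side_gt0.
have I0 : (0 <= I)%E by apply: choquet_ge0.
set Ir := fine I.
have IE : I = Ir%:E by rewrite fineK // ge0_fin_numE.
have JcI c : (Jc c <= I)%E by apply: choquet_mono.
have Jc0 c : (0 <= Jc c)%E by apply: choquet_ge0.
pose good c := ((t * w c)%:E < Jc c)%E.
have goodB c : good c -> dyside l c <= (Ir / t) `^ beta^-1.
  move=> gc; apply: side_of_w => //; first exact: ltW (side_gt0 _ _).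
  have : ((t * w c)%:E < Ir%:E)%E by rewrite -IE; apply: lt_le_trans gc (JcI c).
  rewrite lte_fin => h; rewrite ler_pdivlMr // mulrC; exact: ltW.
pose MG := [set c | good c /\ forall c', good c' -> dycube a l c `<=` dycube a l c' -> c' = c].
have MGex c0 : good c0 -> exists2 c, MG c & dycube a l c0 `<=` dycube a l c.
  move=> gc0; have [c [gc sc mc]] := max_exists a l0 d0 goodB gc0.
  by exists c.
have MGdisj c1 c2 : MG c1 -> MG c2 -> c1 <> c2 -> dycube a l c1 `&` dycube a l c2 = set0.
  by move=> [g1 m1] [g2 m2]; apply: max_disj m1 m2 g1 g2.
have Ecov : [set x | (t%:E < dymax a l beta f x)%E] `<=` \bigcup_(c in MG) dycube a l c.
  move=> x /= /ereal_sup_gt [_ [c _ <-]] ht.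
  have Qx : dycube a l c x.
    apply: contrapT => nQ; move: ht; rewrite indicE memNset //= !mul0e lte_fin.
    by rewrite ltNge (ltW t0).
  have gc : good c.
    move: ht; rewrite indicE mem_set //= mul1e powRN.
    rewrite -(lte_pmul2r (z := (w c)%:E)) // ?lte_fin //.
    rewrite muleAC -EFinM -(EFinM _ (w c)) mulVf ?(gt_eqF (w0 c)) // => h.
    by apply: (lt_le_trans h); rewrite (mul1e (Jc c)).
  have [c' MGc' sc] := MGex c gc.
  by exists c' => //; apply: sc.
pose adm (A : set (dyidx d)) := A `<=` MG /\ forall c',
  (\esum_(c in [set c | A c /\ dycube a l c `<=` dycube a l c']) (w c)%:E
     <= (2 * w c')%:E)%E.
have [J' [[J'MG J'pack] J'max]] : exists A, adm A /\ forall B, A `<` B -> ~ adm B.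
  apply: Zorn_bigcup => F Fadm tot; split.
    by move=> c [Y FY Yc]; apply: (Fadm Y FY).1.
  move=> c'; apply: ge_ereal_sup => _ [X [finX XS] <-].
  have := @chain_seq _ F tot (finmap.enum_fset (fset_set X)).
  case.
  - move=> x; rewrite in_fset_set // inE => /XS [[Y FY Yx] _].
    by exists Y.
  - move=> e0; rewrite fsbig_finite // e0 big_nil lee_fin mulr_ge0 //.
    exact: ltW.
  - move=> [Y FY hY]; apply: le_trans ((Fadm Y FY).2 c').
    apply: ereal_sup_ubound; exists X => //; split => // x Xx; split.
      by apply: hY; rewrite in_fset_set // mem_set.
    exact: (XS x Xx).2.
have hJ : (\esum_(c in J') Jc c <= C'%:E * I)%E.
  apply: le_trans (hyp g J' g0 _ J'pack) _.
    by move=> c1 c2 /J'MG h1 /J'MG h2; apply: MGdisj.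
  by apply: lee_wpmul2l; [rewrite lee_fin ltW | apply: choquet_mono].
have hS : (\esum_(c in J') (w c)%:E <= (C' / t)%:E * I)%E.
  apply: (@le_trans _ _ (\esum_(c in J') (Jc c * (t^-1)%:E))%E).
    apply: le_esum => c /J'MG [gc _].
    have : ((t * w c)%:E * (t^-1)%:E <= Jc c * (t^-1)%:E)%E.
      by apply: lee_wpmul2r; [rewrite lee_fin invr_ge0 ltW | exact: ltW].
    by rewrite -EFinM mulrAC mulfV ?gt_eqF // mul1r.
  apply: le_trans (@esum_divr _ _ J' Jc (t^-1)%:E Jc0 _) _; first by rewrite lee_fin invr_ge0 ltW.
  apply: le_trans (lee_wpmul2r _ hJ) _; first by rewrite lee_fin invr_ge0 ltW.
  by rewrite muleAC -EFinM.
set Sr := C' / t * Ir.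
have hSr : (\esum_(c in J') (w c)%:E <= Sr%:E)%E by rewrite /Sr EFinM -IE.
pose Blk c := [set c0 | J' c0 /\ dycube a l c0 `<=` dycube a l c].
pose sat c := ((w c)%:E <= \esum_(c0 in Blk c) (w c0)%:E)%E.
have satB c : sat c -> dyside l c <= Sr `^ beta^-1.
  move=> sc; apply: side_of_w => //; first exact: ltW (side_gt0 _ _).
  rewrite -lee_fin; apply: le_trans sc _; apply: le_trans _ hSr.
  by apply: esum_subset => [x []//|x _]; rewrite lee_fin ltW.
pose MS := [set c | sat c /\ forall c', sat c' -> dycube a l c `<=` dycube a l c' -> c' = c].
have MSex c0 : sat c0 -> exists2 c, MS c & dycube a l c0 `<=` dycube a l c.
  move=> gc0; have [c [gc sc mc]] := max_exists a l0 d0 satB gc0.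
  by exists c.
have MSdisj c1 c2 : MS c1 -> MS c2 -> c1 <> c2 -> dycube a l c1 `&` dycube a l c2 = set0.
  by move=> [g1 m1] [g2 m2]; apply: max_disj m1 m2 g1 g2.
have MGsat c : MG c -> exists2 c1, sat c1 & dycube a l c `<=` dycube a l c1.
  move=> MGc; have [Jc'|nJ] := pselect (J' c).
    by exists c => //; apply: esum_single_le; split.
  have nadm : ~ adm (J' `|` [set c]).
    apply: J'max; split; first exact: subsetUl.
    by move=> sub; apply: nJ; apply: sub; right.
  have : ~ (forall c', (\esum_(c0 in [set c0 | (J' `|` [set c]) c0 /\
      dycube a l c0 `<=` dycube a l c']) (w c0)%:E <= (2 * w c')%:E)%E).
    by move=> h; apply: nadm; split => // x [/J'MG //|->].
  move=> /existsNP [c' hc'].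
  have sub : dycube a l c `<=` dycube a l c'.
    apply: contrapT => nsub; apply: hc'.
    have -> : [set c0 | (J' `|` [set c]) c0 /\ dycube a l c0 `<=` dycube a l c']
        = [set c0 | J' c0 /\ dycube a l c0 `<=` dycube a l c'].
      apply/seteqP; split => x [hx sx]; split => //; last by left.
      by case: hx => // ex; rewrite ex in sx.
    exact: J'pack.
  exists c' => //.
  move/negP: hc'; rewrite -ltNge => lt2.
  have hsplit : (\esum_(c0 in [set c0 | (J' `|` [set c]) c0 /\
      dycube a l c0 `<=` dycube a l c']) (w c0)%:E <=
      (w c)%:E + \esum_(c0 in Blk c') (w c0)%:E)%E.
    rewrite (esumID [set c]); last by move=> x _; rewrite lee_fin ltW.
    apply: leeD.
      apply: le_trans (@esum_subset _ _ _ [set c] _ _ _) _.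
          by move=> x [_ ->].
        by move=> x _; rewrite lee_fin ltW.
      by rewrite esum_set1 // lee_fin ltW.
    apply: esum_subset; last by move=> x _; rewrite lee_fin ltW.
    by move=> x [[[Jx|ex] sx] nx] //; split.
  have wcc : w c <= w c'.
    apply: ge0_ler_powR; first exact: ltW.
    - by rewrite nnegrE ltW // side_gt0.
    - by rewrite nnegrE ltW // side_gt0.
    exact: Qsub_side sub.
  have := lt_le_trans lt2 hsplit.
  rewrite /sat.
  have E'0 : (0 <= \esum_(c0 in Blk c') (w c0)%:E)%E.
    by apply: esum_ge0 => x _; rewrite lee_fin ltW.
  move: (\esum_(c0 in Blk c') (w c0)%:E)%E E'0 => E' E'0.
  case: E' E'0 => [r||] // r0.
    by rewrite -EFinD !lte_fin lee_fin => h; lra.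
  by rewrite leey.
have Eall : [set x | (t%:E < dymax a l beta f x)%E] `<=` \bigcup_(c in MS) dycube a l c.
  move=> x /Ecov [c MGc Qx].
  have [c1 s1 sc1] := MGsat c MGc.
  have [c2 MSc2 sc2] := MSex c1 s1.
  by exists c2 => //; apply: sc2; apply: sc1.
apply: le_trans (hcontent_cover beta Eall) _.
apply: le_trans _ hS.
apply: (@le_trans _ _ (\esum_(c in MS) \esum_(c0 in Blk c) (w c0)%:E)%E).
  by apply: le_esum => c [sc _].
rewrite (esum_esum (a := fun _ j => (w j)%:E)); last by move=> *; rewrite lee_fin ltW.
rewrite -(esum_image _ snd (fun j => (w j)%:E)); last first.
  move=> [c c0] [c' c0'] /=; rewrite !inE => -[MSc [Jc0' s0]] [MSc' [Jc0'' s0']] /= e.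
  subst c0'; congr (_, _).
  apply: contrapT => ne.
  have := MSdisj _ _ MSc MSc' ne.
  move/seteqP => [+ _] => /(_ (corner a l c0)) h.
  by apply: h; split; [apply: s0 | apply: s0']; apply: corner_in.
apply: esum_subset; last by move=> x _; rewrite lee_fin ltW.
by move=> _ [[c c0] [_ [Jc0' _]] <-].
Qed.
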